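(* Let $n$ be sufficiently large and let $K_{2n+1}$ be ND-coloured. Let $x,y\in V(K_{2n+1})$ be distinct vertices, let $c_1,c_2\in C(K_{2n+1})$ be distinct colours, and let $X\subseteq V(K_{2n+1})$ and $C\subseteq C(K_{2n+1})$ satisfy $|X|\leq n/25$ and $|C|\leq n/25$. Then there is a set $C'\subseteq C(K_{2n+1})\setminus (C\cup\{c_1,c_2\})$ with $|C'|=6$ such that, for each $i\in \{1,2\}$, there is a $(C'\cup\{c_i\})$-rainbow $x,y$-path of length 7 all of whose interior vertices lie in $V(K_{2n+1})\setminus X$.
   Context: ND-colouring of $K_{2n+1}$: vertex set $\{0,\dots,2n\}$, edge $ij$ has colour $k\in\{1,\dots,n\}$ where $i-j\equiv\pm k\pmod{2n+1}$; $C(K_{2n+1})=\{1,\dots,n\}$. A graph is $D$-rainbow if its edges have distinct colours all in $D$. Length of a path is its number of edges. *)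

(* Defs.v *)
From mathcomp Require Import all_boot.
Set Implicit Arguments. Unset Strict Implicit. Unset Printing Implicit Defensive.

(* Vertices of K_{2n+1}: 'I_(2n+1), i.e. {0,...,2n}.  Colours: naturals 1..n. *)
Notation vert n := 'I_(n.*2.+1).

(* ND-colouring: colour of edge ij is the k in {1..n} with i - j = +-k mod 2n+1 *)
Definition ndcol (n : nat) (i j : vert n) : nat :=
  let d := (i + n.*2.+1 - j) %% n.*2.+1 in
  if d <= n then d else n.*2.+1 - d.

Definition is_colour (n c : nat) : bool := (0 < c) && (c <= n).

(* A path is given by its start vertex x and the remaining vertices s
   (so the vertex sequence is x :: s, its length is size s). *)
Definition xy_path n (x y : vert n) (s : seq (vert n)) : bool :=
  uniq (x :: s) && (last x s == y).

Definition path_cols n (x : vert n) (s : seq (vert n)) : seq nat :=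
  pairmap (@ndcol n) x s.

Definition rainbow n (D : seq nat) (x : vert n) (s : seq (vert n)) : bool :=
  uniq (path_cols x s) && all (fun c => c \in D) (path_cols x s).

Definition interior n (x : vert n) (s : seq (vert n)) : seq (vert n) :=
  take (size s).-1 s.

(* Main.v *)
Require Import Defs.
From mathcomp Require Import all_boot all_order all_algebra zify.
Import GRing.Theory.
Open Scope ring_scope.
Set Implicit Arguments. Unset Strict Implicit. Unset Printing Implicit Defensive.

Section S.
Variable n : nat.
Local Notation N := (n.*2.+1).
Local Notation V := 'I_(n.*2.+1).

Lemma valD (a b : V) : nat_of_ord (a + b) = ((a + b) %% N)%N. Proof. by []. Qed.
Lemma valN (a : V) : nat_of_ord (- a) = ((N - a) %% N)%N. Proof. by []. Qed.
Lemma valB (a b : V) : nat_of_ord (a - b) = ((a + (N - b)) %% N)%N.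
Proof. by rewrite valD valN modnDmr. Qed.

Definition ccol (z : V) : nat := if (nat_of_ord z <= n)%N then nat_of_ord z else (N - nat_of_ord z)%N.

Lemma ndcolE (a b : V) : ndcol a b = ccol (a - b).
Proof.
rewrite /ndcol /ccol valB addnBA //; last by apply: ltnW.
Qed.

Lemma valN' (a : V) : nat_of_ord (- a) = if nat_of_ord a == 0%N then 0%N else (N - a)%N.
Proof.
rewrite valN; case: eqP => [->|h]; first by rewrite subn0 modnn.
rewrite modn_small //; have := ltn_ord a; lia.
Qed.

Lemma ccolN (z : V) : ccol (- z) = ccol z.
Proof.
rewrite /ccol valN'; case: eqP => [h|h] //=; first by rewrite h.
have := ltn_ord z; case: ifP; case: ifP; lia.
Qed.

Lemma ccol_inj (z w : V) : ccol z = ccol w -> z = w \/ z = - w.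
Proof.
rewrite /ccol => H.
have := ltn_ord z; have := ltn_ord w => lw lz.
case: (nat_of_ord w =P 0%N) => w0.
  left; apply: ord_inj; rewrite w0 leq0n in H *; move: H; case: ifP; lia.
move: H; case: ifP => hz; case: ifP => hw => H.
- by left; apply: ord_inj.
- right; apply: ord_inj; rewrite valN' (introF eqP w0); lia.
- right; apply: ord_inj; rewrite valN' (introF eqP w0); lia.
- left; apply: ord_inj; lia.
Qed.

Lemma ccol_pos (z : V) : z != 0 -> (0 < ccol z <= n)%N.
Proof.
move=> nz; have : nat_of_ord z != 0%N by apply: contra nz => /eqP h; apply/eqP/ord_inj.
rewrite /ccol; have := ltn_ord z; case: ifP; lia.
Qed.

Lemma val_inZp c : (c < N)%N -> nat_of_ord (inZp c : V) = c.
Proof. by move=> h; rewrite /= modn_small. Qed.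

Lemma ccol_inZp c : (c <= n)%N -> ccol (inZp c) = c.
Proof. move=> h; rewrite /ccol val_inZp ?h //; lia. Qed.

Lemma ccol_eq (z : V) c : ccol z = c -> z = inZp c \/ z = - inZp c.
Proof.
move=> H; have cn : (c <= n)%N by rewrite -H /ccol; have := ltn_ord z; case: ifP; lia.
by apply: ccol_inj; rewrite ccol_inZp.
Qed.

Definition zhalf (z : V) : V := z *+ n.+1.
Lemma mulrnN (z : V) : z *+ N = 0.
Proof. by apply: ord_inj; rewrite Zp_mulrn /= modnMl. Qed.
Lemma half2 (z : V) : zhalf (z *+ 2) = z.
Proof.
rewrite /zhalf -mulrnA.
have -> : (2 * n.+1 = N + 1)%N by lia.
by rewrite mulrnDr mulrnN add0r.
Qed.
Lemma twohalf (z : V) : (zhalf z) *+ 2 = z.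
Proof. by rewrite /zhalf -mulrnA mulnC mulrnA -/(zhalf (z *+ 2)) half2. Qed.


Fixpoint lin (ks : seq int) (vs : seq V) : V :=
  if ks is k :: ks' then head (0 : V) vs *~ k + lin ks' (behead vs) else 0.

Fixpoint vadd (a b : seq int) : seq int :=
  match a, b with
  | x :: a', y :: b' => (x + y) :: vadd a' b'
  | [::], _ => b
  | _, [::] => a
  end.
Definition vneg (a : seq int) := map (fun x => - x) a.

Lemma lin_add a b vs : lin (vadd a b) vs = lin a vs + lin b vs.
Proof.
elim: a b vs => [|x a IH] [|y b] vs /=; rewrite ?add0r ?addr0 //.
by rewrite IH mulrzDr addrACA.
Qed.

Lemma lin_neg a vs : lin (vneg a) vs = - lin a vs.
Proof. by elim: a vs => [|x a IH] vs /=; rewrite ?oppr0 // IH mulrNz opprD. Qed.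

Definition lform := (seq int * seq int)%type.
Definition fadd (f g : lform) : lform := (vadd f.1 g.1, vadd f.2 g.2).
Definition fneg (f : lform) : lform := (vneg f.1, vneg f.2).
Definition fsub f g := fadd f (fneg g).

Section Eval.
Variables ps cs : seq V.
Definition eval (f : lform) : V := lin f.1 ps + lin f.2 cs.
Lemma eval_add f g : eval (fadd f g) = eval f + eval g.
Proof. by rewrite /eval /= !lin_add addrACA. Qed.
Lemma eval_neg f : eval (fneg f) = - eval f.
Proof. by rewrite /eval /= !lin_neg opprD. Qed.
Lemma eval_sub f g : eval (fsub f g) = eval f - eval g.
Proof. by rewrite /fsub eval_add eval_neg. Qed.

Fixpoint diffs (l : seq lform) : seq lform :=
  if l is a :: l' then [seq fsub a b | b <- l'] ++ diffs l' else [::].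
Fixpoint diffs2 (l : seq lform) : seq lform :=
  if l is a :: l' then [seq fsub a b | b <- l'] ++ [seq fadd a b | b <- l'] ++ diffs2 l'
  else [::].

Lemma uniq_eval l : (forall f, f \in diffs l -> eval f != 0) -> uniq (map eval l).
Proof.
elim: l => [|a l IH] //= H; apply/andP; split; last first.
  by apply: IH => f hf; apply: H; rewrite mem_cat hf orbT.
apply/mapP => -[b hb e].
have : eval (fsub a b) != 0 by apply: H; rewrite mem_cat; apply/orP; left; apply/mapP; exists b.
by rewrite eval_sub e subrr eqxx.
Qed.

Lemma uniq_col l : (forall f, f \in diffs2 l -> eval f != 0) -> uniq (map (fun f => ccol (eval f)) l).
Proof.
elim: l => [|a l IH] //= H; apply/andP; split; last first.
  by apply: IH => f hf; apply: H; rewrite !mem_cat hf !orbT.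
apply/mapP => -[b hb /ccol_inj [e|e]].
  have : eval (fsub a b) != 0 by apply: H; rewrite mem_cat; apply/orP; left; apply/mapP; exists b.
  by rewrite eval_sub e subrr eqxx.
have : eval (fadd a b) != 0.
  by apply: H; rewrite !mem_cat; apply/orP; right; apply/orP; left; apply/mapP; exists b.
by rewrite eval_add e addNr eqxx.
Qed.
End Eval.

Fixpoint valid (ks : seq int) : bool :=
  if ks is k :: ks' then (if k == 0 then valid ks' else k \in [:: 1; -1; 2; -2]) else false.

Definition kinv (k : int) (z : V) : V :=
  if k == 1 then z else if k == -1 then - z else if k == 2 then zhalf z else zhalf (- z).

Lemma kinvP k p z : k \in [:: 1; -1; 2; -2] -> p *~ k = z -> p = kinv k z.
Proof.
rewrite /kinv !inE => /or4P [] /eqP -> /= <-.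
- by rewrite mulr1z.
- by rewrite mulrN1z opprK.
- by rewrite (_ : p *~ 2 = p *+ 2) // half2.
- by rewrite (_ : p *~ (-2) = - (p *+ 2)) ?opprK ?half2 // -mulrNz.
Qed.

Lemma avoid_exists (s : seq V) : (size s < N)%N -> exists p : V, p \notin s.
Proof.
move=> hs; case: (pickP (fun p : V => p \notin s)) => [p Hp|H]; first by exists p.
have e : #|s| = N.
  rewrite -[RHS](card_ord N); apply: eq_card => p; rewrite /= (negbFE (H p)).
  by [].
by have := card_size s; rewrite e leqNgt hs.
Qed.

Lemma greedy (L : seq (seq int * V * seq V)) :
  all (fun it => valid it.1.1) L -> (sumn [seq size it.2 | it <- L] < N)%N ->
  exists ps : seq V, all (fun it => lin it.1.1 ps + it.1.2 \notin it.2) L.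
Proof.
move=> hv hb.
suff: forall m, all (fun it => size it.1.1 <= m)%N L ->
  exists ps : seq V, all (fun it => lin it.1.1 ps + it.1.2 \notin it.2) L.
  move=> H; apply: (H (\max_(it <- L) size it.1.1)%N); apply/allP => it hit.
  exact: (@leq_bigmax_seq _ L xpredT (fun it => size it.1.1) it hit).
move=> m; elim: m L hv hb => [|m IH] L hv hb hs.
  case: L hv hs {hb} => [|[[ks c] A] L] //=; first by exists [::].
  by case: ks.
pose L0 := [seq (behead it.1.1, it.1.2, it.2) | it <- L & head 0 it.1.1 == 0].
have [ps' Hps'] : exists ps : seq V, all (fun it => lin it.1.1 ps + it.1.2 \notin it.2) L0.
  apply: IH.
  - rewrite all_map all_filter; apply/allP => -[[ks c] A] hin /=; apply/implyP => /eqP k0.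
    move/allP: hv => /(_ _ hin) /=; case: ks k0 {hin} => [|k ks] //= ->.
    by rewrite eqxx.
  - apply: leq_ltn_trans hb; rewrite -map_comp.
    elim: L {hv hs L0} => [|it L IHL] //=; case: ifP => _ /=.
      by rewrite leq_add2l.
    by apply: leq_trans IHL (leq_addl _ _).
  - rewrite all_map all_filter; apply/allP => -[[[|k ks] c] A] hin //=; apply/implyP => _.
    by move/allP: hs => /(_ _ hin).
pose B := flatten [seq [seq kinv (head 0 it.1.1) (a - (lin (behead it.1.1) ps' + it.1.2)) | a <- it.2]
                  | it <- L & head 0 it.1.1 != 0].
have [p Hp] : exists p : V, p \notin B.
  apply: avoid_exists; apply: leq_ltn_trans hb.
  rewrite /B size_flatten /shape -map_comp.
  elim: L {hv hs L0 Hps' B IH} => [|it L IHL] //=; case: ifP => _ /=.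
    by rewrite size_map leq_add2l.
  by apply: leq_trans IHL (leq_addl _ _).
exists (p :: ps'); apply/allP => -[[[|k ks] c] A] hin /=.
  by move/allP: hv => /(_ _ hin).
case: (k =P 0) => [k0|kn0].
  subst k; move/allP: Hps' => /(_ (ks, c, A)); rewrite mulr0z add0r; apply.
  by apply/mapP; exists (0 :: ks, c, A); rewrite // mem_filter /=.
apply/negP => hA; move/negP: Hp; apply; apply/flattenP.
exists [seq kinv k (a - (lin ks ps' + c)) | a <- A].
  by apply/mapP; exists (k :: ks, c, A); rewrite // mem_filter /= hin andbT; apply/eqP.
apply/mapP; exists (p *~ k + lin ks ps' + c); first by [].
apply: kinvP; last by rewrite -[p *~ k + _ + c]addrA addrK.
by move/allP: hv => /(_ _ hin) /=; rewrite (introF eqP kn0).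
Qed.

End S.

Definition z5 : seq int := [:: 0; 0; 0; 0; 0].
Definition fT : lform := ([:: 0; 0; 0; 1], z5).
Definition fU : lform := ([:: 0; 0; 1; 0], z5).
Definition fTU : lform := ([:: 0; 0; 1; 1], [:: 0; 0; 0; 0; 1]).
Definition fW : lform := ([:: 0; 1; 0; 0], z5).
Definition fZ : lform := ([:: 1; 0; 0; 0], z5).
Definition fWZ : lform := ([:: 1; 1; 0; 0], [:: 1; -1; 1; 0; -1]).
Definition fC1 : lform := ([:: 0; 0; 0; 0], [:: 0; 0; 1; 0; 0]).
Definition fC2 : lform := ([:: 0; 0; 0; 0], [:: 0; 0; 0; 1; 0]).
Definition fX : lform := ([:: 0; 0; 0; 0], [:: 1; 0; 0; 0; 0]).
Definition Rf := [:: fT; fU; fTU; fW; fZ; fWZ].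
Definition steps1 := [:: fT; fW; fU; fC1; fZ; fneg fTU; fneg fWZ].
Definition steps2 := [:: fneg fT; fW; fneg fU; fC2; fZ; fTU; fneg fWZ].
Fixpoint pref (a : lform) (l : seq lform) : seq lform :=
  if l is b :: l' then let c := fadd a b in c :: pref c l' else [::].
Definition Vs1 := pref fX steps1.
Definition Vs2 := pref fX steps2.
Definition Ds1 := pairmap fsub fX Vs1.
Definition Ds2 := pairmap fsub fX Vs2.
Definition nzp (f : lform) := has (fun k => k != 0) f.1.
Definition Lk : seq (lform * nat) :=
  [seq (f, 0%N) | f <- diffs (fX :: Vs1) & nzp f] ++
  [seq (f, 0%N) | f <- diffs (fX :: Vs2) & nzp f] ++
  [seq (f, 0%N) | f <- diffs2 Ds1] ++
  [seq (f, 0%N) | f <- diffs2 Ds2] ++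
  [seq (f, 0%N) | f <- diffs2 Rf] ++
  [seq (f, 2%N) | f <- Rf] ++
  [seq (f, 1%N) | f <- take 6 Vs1] ++
  [seq (f, 1%N) | f <- take 6 Vs2].

Lemma Lk_valid : all (fun f => valid f.1.1) Lk. Proof. by vm_compute. Qed.
Lemma Lk_cnt0 : count (fun f => f.2 == 0%N) Lk = 166%N. Proof. by vm_compute. Qed.
Lemma Lk_cnt1 : count (fun f => f.2 == 1%N) Lk = 12%N. Proof. by vm_compute. Qed.
Lemma Lk_cnt2 : count (fun f => (f.2 != 0%N) && (f.2 != 1%N)) Lk = 6%N. Proof. by vm_compute. Qed.
Lemma nzp_all : all nzp (diffs2 Ds1 ++ diffs2 Ds2 ++ diffs2 Rf). Proof. by vm_compute. Qed.
Lemma Ds1_mem : all (fun D => (D \in Rf) || (fneg D \in Rf) || (D == fneg fC1) || (D == fC1)) Ds1.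
Proof. by vm_compute. Qed.
Lemma Ds2_mem : all (fun D => (D \in Rf) || (fneg D \in Rf) || (D == fneg fC2) || (D == fC2)) Ds2.
Proof. by vm_compute. Qed.
Lemma nz1 : [seq f <- diffs (fX :: Vs1) | ~~ nzp f] =
  [:: ([:: 0; 0; 0; 0], [:: 1; -1; 0; 0; 0]); ([:: 0; 0; 0; 0], [:: 0; 0; -1; 0; 0])].
Proof. by vm_compute. Qed.
Lemma nz2 : [seq f <- diffs (fX :: Vs2) | ~~ nzp f] =
  [:: ([:: 0; 0; 0; 0], [:: 1; -1; 1; -1; -2]); ([:: 0; 0; 0; 0], [:: 0; 0; 0; -1; 0])].
Proof. by vm_compute. Qed.
Lemma last1 : last fX Vs1 = ([:: 0; 0; 0; 0], [:: 0; 1; 0; 0; 0]). Proof. by vm_compute. Qed.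
Lemma last2 : last fX Vs2 = ([:: 0; 0; 0; 0], [:: 0; 1; -1; 1; 2]). Proof. by vm_compute. Qed.
Lemma size_Vs1 : size Vs1 = 7%N. Proof. by []. Qed.
Lemma size_Vs2 : size Vs2 = 7%N. Proof. by []. Qed.

Lemma mem_pair (s : seq lform) f (k : nat) : f \in s -> (f, k) \in [seq (g, k) | g <- s].
Proof. by move=> h; apply: (map_f (fun g => (g, k))). Qed.
Lemma Lk_V1 f : f \in diffs (fX :: Vs1) -> nzp f -> (f, 0%N) \in Lk.
Proof. move=> h1 h2; rewrite /Lk mem_cat; apply/orP; left; apply: mem_pair; by rewrite mem_filter h2. Qed.
Lemma Lk_V2 f : f \in diffs (fX :: Vs2) -> nzp f -> (f, 0%N) \in Lk.
Proof.
move=> h1 h2; rewrite /Lk mem_cat; apply/orP; right.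
rewrite mem_cat; apply/orP; left; apply: mem_pair; by rewrite mem_filter h2.
Qed.
Lemma Lk_D1 f : f \in diffs2 Ds1 -> (f, 0%N) \in Lk.
Proof.
move=> h1; rewrite /Lk mem_cat; apply/orP; right.
do 1 (rewrite mem_cat; apply/orP; right).
rewrite mem_cat; apply/orP; left; exact: mem_pair.
Qed.
Lemma Lk_D2 f : f \in diffs2 Ds2 -> (f, 0%N) \in Lk.
Proof.
move=> h1; rewrite /Lk mem_cat; apply/orP; right.
do 2 (rewrite mem_cat; apply/orP; right).
rewrite mem_cat; apply/orP; left; exact: mem_pair.
Qed.
Lemma Lk_DR f : f \in diffs2 Rf -> (f, 0%N) \in Lk.
Proof.
move=> h1; rewrite /Lk mem_cat; apply/orP; right.
do 3 (rewrite mem_cat; apply/orP; right).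
rewrite mem_cat; apply/orP; left; exact: mem_pair.
Qed.
Lemma Lk_R f : f \in Rf -> (f, 2%N) \in Lk.
Proof.
move=> h1; rewrite /Lk mem_cat; apply/orP; right.
do 4 (rewrite mem_cat; apply/orP; right).
rewrite mem_cat; apply/orP; left; exact: mem_pair.
Qed.
Lemma Lk_I1 f : f \in take 6 Vs1 -> (f, 1%N) \in Lk.
Proof.
move=> h1; rewrite /Lk mem_cat; apply/orP; right.
do 5 (rewrite mem_cat; apply/orP; right).
rewrite mem_cat; apply/orP; left; exact: mem_pair.
Qed.
Lemma Lk_I2 f : f \in take 6 Vs2 -> (f, 1%N) \in Lk.
Proof.
move=> h1; rewrite /Lk mem_cat; apply/orP; right.
do 6 (rewrite mem_cat; apply/orP; right).
exact: mem_pair.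
Qed.

Section T.
Variable n : nat.
Local Notation V := 'I_(n.*2.+1).
Variables (X : {set V}) (Cpm : seq V) (c1z c2z : V).

Definition avoid (k : nat) : seq V :=
  if k == 0%N then [:: 0] else if k == 1%N then enum X
  else [:: 0; c1z; - c1z; c2z; - c2z] ++ Cpm.

Lemma avoid0 : avoid 0 = [:: 0]. Proof. by []. Qed.
Lemma avoid1 : avoid 1 = enum X. Proof. by []. Qed.
Lemma avoid2 : avoid 2 = [:: 0; c1z; - c1z; c2z; - c2z] ++ Cpm. Proof. by []. Qed.

Lemma sumn_avoid (L : seq (lform * nat)) : sumn [seq size (avoid f.2) | f <- L] =
  (count (fun f => f.2 == 0%N) L + count (fun f => f.2 == 1%N) L * size (enum X)
   + count (fun f => (f.2 != 0%N) && (f.2 != 1%N)) L * (5 + size Cpm))%N.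
Proof.
elim: L => //= -[f k] L ->; rewrite /avoid /=.
case: k => [|[|k]] /=; nia.
Qed.

Lemma pairmap_ndcol ps cs a l :
  pairmap (@ndcol n) (eval ps cs a) (map (eval ps cs) l) =
  map (fun f => ccol (eval ps cs f)) (pairmap fsub a l).
Proof. by elim: l a => //= b l IH a; rewrite IH ndcolE eval_sub. Qed.

Lemma path_ok ps cs (x y : V) (ci : nat) (Vs : seq lform) (fC : lform) (R : seq lform) :
  eval ps cs fX = x -> eval ps cs (last fX Vs) = y -> size Vs = 7%N ->
  (forall f, f \in diffs (fX :: Vs) -> eval ps cs f != 0) ->
  (forall f, f \in diffs2 (pairmap fsub fX Vs) -> eval ps cs f != 0) ->
  all (fun D => (D \in R) || (fneg D \in R) || (D == fneg fC) || (D == fC)) (pairmap fsub fX Vs) ->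
  ccol (eval ps cs fC) = ci ->
  (forall f, f \in take 6 Vs -> eval ps cs f \notin X) ->
  exists s : seq V, [/\ xy_path x y s, size s = 7%N,
     rainbow (ci :: map (fun f => ccol (eval ps cs f)) R) x s &
     all (fun v => v \notin X) (interior x s)].
Proof.
move=> ex ey sz hd hd2 hm hc hX; exists (map (eval ps cs) Vs); split.
- rewrite /xy_path -ex -map_cons; apply/andP; split; first exact: uniq_eval.
  by rewrite (last_map (eval ps cs)) ey.
- by rewrite size_map.
- rewrite /rainbow /path_cols -ex pairmap_ndcol; apply/andP; split; first exact: uniq_col.
  rewrite all_map; apply/allP => D hD /=; move/allP: hm => /(_ D hD) /orP [/orP [/orP [h|h]|/eqP->]|/eqP->].
  + rewrite inE; apply/orP; right; exact: (map_f (fun f => ccol (eval ps cs f)) h).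
  + rewrite inE -ccolN -eval_neg; apply/orP; right; exact: (map_f (fun f => ccol (eval ps cs f)) h).
  + by rewrite eval_neg ccolN hc mem_head.
  + by rewrite hc mem_head.
- rewrite /interior size_map sz /= -map_take all_map; apply/allP => f hf /=; exact: hX.
Qed.
End T.
Close Scope ring_scope.

Theorem lemma5p2 : exists N : nat, forall n : nat, N <= n ->
  forall (x y : vert n) (c1 c2 : nat) (X : {set vert n}) (C : seq nat),
    x != y ->
    is_colour n c1 -> is_colour n c2 -> c1 != c2 ->
    all (is_colour n) C ->
    #|X| * 25 <= n ->
    size (undup C) * 25 <= n ->
    exists C' : seq nat,
      [/\ uniq C', size C' = 6,
          all (is_colour n) C',
          all (fun c => (c \notin C) && (c != c1) && (c != c2)) C' &
          forall ci, ci \in [:: c1; c2] ->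
            exists s : seq (vert n),
              [/\ xy_path x y s, size s = 7,
                  rainbow (ci :: C') x s &
                  all (fun v => v \notin X) (interior x s)]].
Proof.
exists 200%N => n hn x y c1 c2 X C hxy hc1 hc2 hc12 hC hX hCs.
pose c1z : 'I_(n.*2.+1) := inZp c1.
pose c2z : 'I_(n.*2.+1) := inZp c2.
pose h := zhalf (c1z - c2z)%R.
pose cs := [:: x; y; c1z; c2z; h].
pose Cpm := flatten [seq [:: inZp c : 'I_(n.*2.+1); (- inZp c)%R] | c <- undup C].
have sCpm : size Cpm = (2 * size (undup C))%N.
  rewrite /Cpm; elim: (undup C) => //= c l ->; lia.
pose Lt := [seq (f.1.1, lin f.1.2 cs, avoid X Cpm c1z c2z f.2) | f <- Lk].
have [ps Hps] : exists ps, all (fun it => lin it.1.1 ps + it.1.2 \notin it.2)%R Lt.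
  apply: greedy.
- rewrite all_map; exact: Lk_valid.
- rewrite /Lt -map_comp.
  have -> : sumn [seq (size \o snd \o (fun f : lform * nat => (f.1.1, lin f.1.2 cs, avoid X Cpm c1z c2z f.2))) i | i <- Lk]
     = sumn [seq size (avoid X Cpm c1z c2z f.2) | f <- Lk] by [].
  rewrite sumn_avoid Lk_cnt0 Lk_cnt1 Lk_cnt2 sCpm -cardE; lia.
have inLk : forall f k, (f, k) \in Lk -> eval ps cs f \notin avoid X Cpm c1z c2z k.
  move=> f k hin; move/allP: Hps => /(_ _ (map_f (fun f : lform * nat => (f.1.1, lin f.1.2 cs, avoid X Cpm c1z c2z f.2)) hin)).
  by [].
have hc1' : (0 < c1 <= n)%N by [].
have hc2' : (0 < c2 <= n)%N by [].
have vc1 : nat_of_ord c1z = c1 by apply: val_inZp; lia.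
have vc2 : nat_of_ord c2z = c2 by apply: val_inZp; lia.
have c1z0 : c1z != 0%R by apply/eqP => /(congr1 (@nat_of_ord _)); rewrite vc1 /=; lia.
have c2z0 : c2z != 0%R by apply/eqP => /(congr1 (@nat_of_ord _)); rewrite vc2 /=; lia.
have h2 : (h *+ 2 = c1z - c2z)%R by apply: twohalf.
have exX : eval ps cs fX = x.
  by rewrite /eval /= !mulr0z !mulr1z !addr0 !add0r.
exists [seq ccol (eval ps cs f) | f <- Rf]; split.
- apply: uniq_col => f hf; move: (inLk f 0%N); rewrite avoid0 mem_seq1; apply; exact: Lk_DR.
- by rewrite size_map.
- rewrite all_map; apply/allP => f hf /=.
  have hm := Lk_R hf.
  move: (inLk _ _ hm).
  rewrite avoid2 /= inE => /norP [nz _]; exact: ccol_pos.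
- rewrite all_map; apply/allP => f hf /=.
  have hm := Lk_R hf.
  move: (inLk _ _ hm).
  rewrite avoid2 /= !inE => /norP [nz /norP [n1 /norP [n2 /norP [n3 /norP [n4 nC]]]]].
  apply/andP; split; first (apply/andP; split).
  + apply/negP => hin; move/negP: nC; apply.
    move: hin; set c := ccol _ => hin.
    have [e|e] := ccol_eq (erefl c); apply/flattenP.
      exists [:: inZp c; (- inZp c)%R].
        by apply: map_f; rewrite mem_undup.
      by rewrite -e mem_head.
    exists [:: inZp c; (- inZp c)%R].
      by apply: map_f; rewrite mem_undup.
    by rewrite -e !inE eqxx orbT.
  + apply/eqP => e; have [e'|e'] := ccol_eq e.
      by move/eqP: n1; apply.
    by move/eqP: n2; apply.
  + apply/eqP => e; have [e'|e'] := ccol_eq e.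
      by move/eqP: n3; apply.
    by move/eqP: n4; apply.
- move=> ci; rewrite !inE => /orP [/eqP-> | /eqP->].
  + apply: (@path_ok n X ps cs x y c1 Vs1 fC1 Rf exX _ size_Vs1 _ _ Ds1_mem _ _).
    * by rewrite last1 /eval /= ?mulr0z ?mulr1z ?mulrN1z ?add0r ?addr0.
    * move=> f hf; case hnz: (nzp f).
        by move: (inLk f 0%N (Lk_V1 hf hnz)); rewrite avoid0 mem_seq1.
      have : f \in [seq f <- diffs (fX :: Vs1) | ~~ nzp f] by rewrite mem_filter hnz hf.
      rewrite nz1 !inE => /orP [/eqP-> | /eqP->]; rewrite /eval /= ?mulr0z ?mulr1z ?mulrN1z ?add0r ?addr0.
        by rewrite subr_eq0.
      by rewrite oppr_eq0.
    * by move=> f hf; move: (inLk f 0%N (Lk_D1 hf)); rewrite avoid0 mem_seq1.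
    * rewrite /eval /= ?mulr0z ?mulr1z ?mulrN1z ?add0r ?addr0; apply: ccol_inZp; lia.
    * by move=> f hf; move: (inLk f 1%N (Lk_I1 hf)); rewrite avoid1 mem_enum.
  + apply: (@path_ok n X ps cs x y c2 Vs2 fC2 Rf exX _ size_Vs2 _ _ Ds2_mem _ _).
    * rewrite last2 /eval /= ?mulr0z ?mulr1z ?mulrN1z ?add0r ?addr0.
      by rewrite (_ : h *~ 2 = h *+ 2)%R // h2 (addrC c1z) addNKr addNr addr0.
    * move=> f hf; case hnz: (nzp f).
        by move: (inLk f 0%N (Lk_V2 hf hnz)); rewrite avoid0 mem_seq1.
      have : f \in [seq f <- diffs (fX :: Vs2) | ~~ nzp f] by rewrite mem_filter hnz hf.
      rewrite nz2 !inE => /orP [/eqP-> | /eqP->]; rewrite /eval /= ?mulr0z ?mulr1z ?mulrN1z ?add0r ?addr0.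
        have hm2 : (h *~ -2 = c2z - c1z)%R.
          by rewrite mulrNz (_ : h *~ 2 = h *+ 2)%R // h2 opprB.
        by rewrite hm2 addKr addrN addr0 subr_eq0.
      by rewrite oppr_eq0.
    * by move=> f hf; move: (inLk f 0%N (Lk_D2 hf)); rewrite avoid0 mem_seq1.
    * rewrite /eval /= ?mulr0z ?mulr1z ?mulrN1z ?add0r ?addr0; apply: ccol_inZp; lia.
    * by move=> f hf; move: (inLk f 1%N (Lk_I2 hf)); rewrite avoid1 mem_enum.
Qed.
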